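(* Let $(X,d)$ be an $n$-point metric space ($n\ge2$) with aspect ratio $\alpha=\mathrm{diam}(X)/\mathrm{sep}(X)$, where $\mathrm{diam}(X)=\max_{x,y}d(x,y)$ and $\mathrm{sep}(X)=\min_{x\ne y}d(x,y)$. Then for every $0<\varepsilon<1$ and every integer $k\ge(n+\frac32)(\frac{\alpha}{\varepsilon}+\mathrm{diam}(X)+1)$, $(X,d)$ embeds with distortion at most $(1-\varepsilon)^{-1}$ into $([\mathbb{N}]^k,d^{(k)}_{\mathrm{I}})$; that is, there are $s>0$ and $f:X\to[\mathbb{N}]^k$ with $s\,d(x,y)\le d^{(k)}_{\mathrm{I}}(f(x),f(y))\le s(1-\varepsilon)^{-1}d(x,y)$ for all $x,y\in X$. In particular, for every finite metric space $X$ and every $\varepsilon>0$ there is $k\in\mathbb{N}$ such that $X$ embeds into $([\mathbb{N}]^k,d^{(k)}_{\mathrm{I}})$ (hence into $([\mathbb{N}]^{<\omega},d_{\mathrm{I}})$) with distortion at most $1+\varepsilon$.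
   Context: For $k\in\mathbb{N}$, $[\mathbb{N}]^k$ is the set of $k$-element subsets of $\mathbb{N}$ written increasingly. In Kalton's interlacing graph on $[\mathbb{N}]^k$, $A=\{a_1<\dots<a_k\}\ne B=\{b_1<\dots<b_k\}$ are adjacent iff either $a_i\le b_i\le a_{i+1}$ ($1\le i<k$) and $a_k\le b_k$, or $b_i\le a_i\le b_{i+1}$ ($1\le i<k$) and $b_k\le a_k$; $d^{(k)}_{\mathrm{I}}$ is the graph metric. $([\mathbb{N}]^{<\omega},d_{\mathrm{I}})$ is the universal interlacing graph on all finite subsets, in which additionally sets whose cardinalities differ by one are adjacent when they interlace ($\{a_1<\dots<a_{m+1}\}$ and $\{b_1<\dots<b_m\}$ with $a_i\le b_i\le a_{i+1}$), and $\emptyset$ is adjacent to all singletons; $d_{\mathrm{I}}$ restricted to $[\mathbb{N}]^k$ equals $d^{(k)}_{\mathrm{I}}$. *)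

(* Defs.v *)
From HB Require Import structures.
From mathcomp Require Import all_boot all_order all_algebra.
From mathcomp Require Import reals.
From Stdlib Require Import ClassicalEpsilon.
Set Implicit Arguments. Unset Strict Implicit. Unset Printing Implicit Defensive.
Import Order.TTheory GRing.Theory Num.Theory.

Definition is_kset (k : nat) (A : seq nat) : bool :=
  (size A == k) && sorted ltn A.

(* [interlace k A B] : a_i <= b_i <= a_{i+1} (1 <= i < k) and a_k <= b_k
   (0-based indices here). *)
Definition interlace (k : nat) (A B : seq nat) : bool :=
  [forall i : 'I_k.-1, (nth 0 A i <= nth 0 B i <= nth 0 A i.+1)%N]
  && (nth 0 A k.-1 <= nth 0 B k.-1)%N.

Definition interlace_adj (k : nat) (A B : seq nat) : bool :=
  (A != B) && (interlace k A B || interlace k B A).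

Definition kwalk (k : nat) (A B : seq nat) (m : nat) : Prop :=
  is_kset k A /\
  exists p : seq (seq nat),
    [/\ size p = m, all (is_kset k) p, path (interlace_adj k) A p
      & last A p = B].

Definition kwalkb (k : nat) (A B : seq nat) : pred nat :=
  fun m => if excluded_middle_informative (kwalk k A B m) then true else false.

(* graph metric d_I^(k): least length of a walk (0 if none exists, which
   never happens between points of [N]^k since the graph is connected) *)
Definition dI (k : nat) (A B : seq nat) : nat :=
  match excluded_middle_informative (exists m, kwalkb k A B m) with
  | left h => ex_minn h
  | right _ => 0%N
  end.

Local Open Scope ring_scope.

Definition is_metric (R : realFieldType) (T : finType) (d : T -> T -> R) : Prop :=
  [/\ forall x y, 0 <= d x y,
      forall x y, d x y = 0 <-> x = y,
      forall x y, d x y = d y x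
    & forall x y z, d x z <= d x y + d y z].

Definition diam (R : realFieldType) (T : finType) (d : T -> T -> R) : R :=
  \big[Num.max/0]_(p : T * T) d p.1 p.2.

(* sep(X) = min_{x <> y} d(x,y); the neutral value diam(X) is harmless since
   every distance is <= diam(X) and the index set is nonempty when |X| >= 2 *)
Definition sep (R : realFieldType) (T : finType) (d : T -> T -> R) : R :=
  \big[Num.min/diam d]_(p : T * T | p.1 != p.2) d p.1 p.2.

(* Main.v *)
Require Import Defs.
From HB Require Import structures.
From mathcomp Require Import all_boot all_order all_algebra.
From mathcomp Require Import reals zify.
From Stdlib Require Import ClassicalEpsilon.
Import Order.TTheory GRing.Theory Num.Theory.
Set Implicit Arguments. Unset Strict Implicit. Unset Printing Implicit Defensive.

Definition cnt (t : nat) (s : seq nat) : nat := count (fun a => a < t)%N s.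

Lemma cnt_zero_gt (a t : nat) s : all (ltn a) s -> (t <= a)%N -> cnt t s = 0%N.
Proof.
elim: s => //= b s IH /andP[hab hs] hta; rewrite /cnt /= -/(cnt t s) IH //.
have : ~~ (b < t)%N by rewrite -leqNgt; lia.
by case: (b < t)%N.
Qed.

Lemma cnt_nth s t i : sorted ltn s -> (i < size s)%N ->
  (i < cnt t s)%N = (nth 0%N s i < t)%N.
Proof.
elim: s i => [//|a s IH] i hs.
have hs' : path ltn a s by [].
have hall : all (ltn a) s by apply: order_path_min hs' => ? ? ? h1 h2; exact: ltn_trans h1 h2.
have hss : sorted ltn s by exact: path_sorted hs'.
rewrite /cnt /= -/(cnt t s).
case: i => [|i] /= hi.
  case hat: (a < t)%N => //=.
  by rewrite (cnt_zero_gt hall) // leqNgt hat.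
case hat: (a < t)%N => /=.
  by rewrite add1n ltnS IH.
rewrite (cnt_zero_gt hall); last by rewrite leqNgt hat.
have h : (a < nth 0%N s i)%N by apply: (allP hall); apply: mem_nth; exact: hi.
apply/esym/negbTE; rewrite -leqNgt; move: hat h; case: ltnP => // h1 _ h2.
exact: leq_trans h1 (ltnW h2).
Qed.

Lemma cnt_size t s : (cnt t s <= size s)%N.
Proof. exact: count_size. Qed.

Lemma interlace_cnt k A B t : is_kset k A -> is_kset k B -> interlace k A B ->
  (cnt t B <= cnt t A)%N /\ (cnt t A <= (cnt t B).+1)%N.
Proof.
move=> /andP[/eqP hA sA] /andP[/eqP hB sB] /andP[/forallP hf hl].
have hle : forall i, (i < k)%N -> (nth 0%N A i <= nth 0%N B i)%N.
  move=> i hi; case: (ltnP i k.-1) => h.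
    by move: (hf (Ordinal h)) => /andP[].
  have -> : i = k.-1 by lia.
  exact: hl.
have hle2 : forall i, (i.+1 < k)%N -> (nth 0%N B i <= nth 0%N A i.+1)%N.
  move=> i hi; have h : (i < k.-1)%N by lia.
  by move: (hf (Ordinal h)) => /andP[].
split.
- case E: (cnt t B) => [//|m].
  have hm : (m < cnt t B)%N by rewrite E.
  have hmk : (m < k)%N by have := cnt_size t B; lia.
  rewrite (cnt_nth _ sB) ?hB // in hm.
  have : (m < cnt t A)%N by rewrite (cnt_nth _ sA) ?hA //; exact: leq_ltn_trans (hle m hmk) hm.
  done.
- case E: (cnt t A) => [//|m]; case: m E => [//|m] E.
  have hm : (m.+1 < cnt t A)%N by rewrite E.
  have hmk : (m.+1 < k)%N by have := cnt_size t A; lia.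
  rewrite (cnt_nth _ sA) ?hA // in hm.
  have : (m < cnt t B)%N by rewrite (cnt_nth _ sB) ?hB; [exact: leq_ltn_trans (hle2 m hmk) hm|lia].
  done.
Qed.

Lemma cnt_interlace k A B : is_kset k A -> is_kset k B ->
  (forall t, (cnt t B <= cnt t A)%N /\ (cnt t A <= (cnt t B).+1)%N) ->
  interlace k A B.
Proof.
move=> /andP[/eqP hA sA] /andP[/eqP hB sB] hc.
have hle : forall i, (i < k)%N -> (nth 0%N A i <= nth 0%N B i)%N.
  move=> i hi; have [h1 _] := hc (nth 0%N B i).+1.
  have : (i < cnt (nth 0%N B i).+1 B)%N by rewrite (cnt_nth _ sB) ?hB.
  move=> h; have : (i < cnt (nth 0%N B i).+1 A)%N by exact: leq_trans h h1.
  by rewrite (cnt_nth _ sA) ?hA.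
have hle2 : forall i, (i.+1 < k)%N -> (nth 0%N B i <= nth 0%N A i.+1)%N.
  move=> i hi; have [_ h1] := hc (nth 0%N A i.+1).+1.
  have : (i.+1 < cnt (nth 0%N A i.+1).+1 A)%N by rewrite (cnt_nth _ sA) ?hA.
  move=> h; have : (i < cnt (nth 0%N A i.+1).+1 B)%N by rewrite -ltnS; exact: leq_trans h h1.
  rewrite (cnt_nth _ sB) ?hB //; lia.
apply/andP; split.
  apply/forallP => i; rewrite hle ?hle2 //; have := ltn_ord i; lia.
case: k hA hB hle {hle2 hc} => [|k] hA hB hle.
  by rewrite !nth_default ?hA ?hB.
exact: hle.
Qed.

Lemma adj_cnt k A B t1 t2 : is_kset k A -> is_kset k B -> interlace_adj k A B ->
  (cnt t1 A + cnt t2 B <= 1 + cnt t1 B + cnt t2 A)%N.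
Proof.
move=> hA hB /andP[_ /orP[h|h]].
  have [h1 h2] := interlace_cnt t1 hA hB h; have [h3 h4] := interlace_cnt t2 hA hB h; lia.
have [h1 h2] := interlace_cnt t1 hB hA h; have [h3 h4] := interlace_cnt t2 hB hA h; lia.
Qed.

Lemma walk_cnt k A p t1 t2 : is_kset k A -> all (is_kset k) p ->
  path (interlace_adj k) A p ->
  (cnt t1 A + cnt t2 (last A p) <= size p + cnt t1 (last A p) + cnt t2 A)%N.
Proof.
elim: p A => [|B p IH] A hA /=; first lia.
move=> /andP[hB hp] /andP[hAB hpath].
have := IH B hB hp hpath; have := adj_cnt t1 t2 hA hB hAB; lia.
Qed.

Lemma dI_spec k A B : is_kset k A ->
  (exists p : seq (seq nat), [/\ all (is_kset k) p, path (interlace_adj k) A p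
      & last A p = B]) ->
  kwalk k A B (dI k A B) /\
  (forall m, kwalk k A B m -> (dI k A B <= m)%N).
Proof.
move=> hA [p [hp1 hp2 hp3]].
have hw : kwalk k A B (size p) by split=> //; exists p; split.
have hex : exists m, kwalkb k A B m.
  exists (size p); rewrite /kwalkb; case: excluded_middle_informative => //.
rewrite /dI; case: excluded_middle_informative => [h|/(_ hex)//].
case: ex_minnP => m hm hmin; split.
  by move: hm; rewrite /kwalkb; case: excluded_middle_informative.
move=> m' hm'; apply: hmin; rewrite /kwalkb; case: excluded_middle_informative => //.
Qed.

Lemma shorten_path (T : eqType) (e : rel T) (P : pred T) x p :
  all P p -> path (fun a b => (a == b) || e a b) x p ->
  exists q, [/\ all P q, path (fun a b => (a != b) && e a b) x q, last x q = last x p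
    & (size q <= size p)%N].
Proof.
elim: p x => [|y p IH] x /=; first by move=> _ _; exists [::].
move=> /andP[hy hp] /andP[hxy hpath].
have [q [hq1 hq2 hq3 hq4]] := IH y hp hpath.
case: (eqVneq x y) => [->|hne]; first by exists q; split => //; exact: leqW.
exists (y :: q); split => /=; [by rewrite hy|by rewrite hne /= -(orFb (e x y)) -(negbTE hne) hxy|done|done].
Qed.

Lemma path_fun (T : Type) (R : rel T) (F : nat -> T) m N :
  (forall i, (m <= i < m + N)%N -> R (F i) (F i.+1)) ->
  path R (F m) [seq F i | i <- iota m.+1 N] /\
  last (F m) [seq F i | i <- iota m.+1 N] = F (m + N).
Proof.
elim: N m => [|N IH] m h /=; first by rewrite addn0.
have [h1 h2] := IH m.+1 (fun i hi => h i ltac:(lia)).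
rewrite h1 h2 addSnnS h //; lia.
Qed.

Lemma cnt_cat t s1 s2 : cnt t (s1 ++ s2) = (cnt t s1 + cnt t s2)%N.
Proof. exact: count_cat. Qed.

Lemma cnt_iota t m l : cnt t (iota m l) = minn l (t - m).
Proof.
elim: l => [|l IH]; first by rewrite /cnt /= min0n.
rewrite -addn1 iotaD cnt_cat IH /cnt /= addn0; case: ltnP => h /=; lia.
Qed.

Lemma sorted_cat_iota s m l : sorted ltn s -> all (fun a => a < m)%N s ->
  sorted ltn (s ++ iota m l).
Proof.
have tr : transitive ltn by move=> ? ? ? h1 h2; exact: ltn_trans h1 h2.
move=> hs ha; rewrite sorted_pairwise // pairwise_cat -!sorted_pairwise // hs iota_ltn_sorted.
rewrite !andbT.
apply/allrelP => a b ha' hb; rewrite mem_iota in hb.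
have := allP ha a ha'; lia.
Qed.

Fixpoint Sp (L : nat) (u : nat -> nat) (m : nat) : seq nat :=
  if m is m'.+1 then Sp L u m' ++ iota (2 * L * m' + L - u m') L else [::].

Definition Sset (n L p : nat) (u : nat -> nat) : seq nat := Sp L u n ++ iota (2 * L * n) p.

Lemma Sset_ext n L p u u' : (forall j, u j = u' j) -> Sset n L p u = Sset n L p u'.
Proof. by move=> h; rewrite /Sset; congr (_ ++ _); elim: n => //= n ->; rewrite h. Qed.

Lemma size_Sp L u m : size (Sp L u m) = (m * L)%N.
Proof. by elim: m => //= m IH; rewrite size_cat IH size_iota mulSn addnC. Qed.

Lemma Sset_kset n L p u : (forall j, (j < n)%N -> (u j <= L)%N) ->
  is_kset (n * L + p) (Sset n L p u).
Proof.
move=> hu; apply/andP; split.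
  by rewrite /Sset size_cat size_Sp size_iota.
suff H : forall m, (m <= n)%N ->
  sorted ltn (Sp L u m) /\ all (fun a => a < 2 * L * m)%N (Sp L u m).
  by have [ha hb] := H n (leqnn n); exact: sorted_cat_iota.
elim=> [|m IH] hm /=; first by [].
have [h1 h2] := IH (ltnW hm).
have hum := hu m hm.
split; first by apply: sorted_cat_iota => //; apply/allP => a /(allP h2); lia.
rewrite all_cat; apply/andP; split.
  by apply/allP => a /(allP h2); rewrite mulnS; lia.
apply/allP => a; rewrite mem_iota mulnS; lia.
Qed.

Lemma cnt_SpS t L u m : cnt t (Sp L u m.+1) = (cnt t (Sp L u m) + minn L (t - (2 * L * m + L - u m)))%N.
Proof. by rewrite /= cnt_cat cnt_iota. Qed.

Lemma cnt_Sp_point L u j m : (forall i, u i <= L)%N ->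
  cnt (2 * L * j + L) (Sp L u m) = if (m <= j)%N then (L * m)%N else (L * j + u j)%N.
Proof.
move=> hu; elim: m => [|m IH]; first by rewrite /cnt /= muln0.
have := hu m; have := hu j.
rewrite cnt_SpS IH.
case: (ltngtP m j) => h.
- have h1 : (2 * L * m.+1 <= 2 * L * j)%N by rewrite leq_mul2l h orbT.
  rewrite mulnS in h1.
  rewrite -!mulnA in h1 *; rewrite mulnS; lia.
- have h1 : (2 * L * j.+1 <= 2 * L * m)%N by rewrite leq_mul2l h orbT.
  rewrite mulnS in h1.
  rewrite -!mulnA in h1 *; lia.
- rewrite h; lia.
Qed.

Lemma cnt_Sset_point n L p u j : (j < n)%N -> (forall i, u i <= L)%N ->
  cnt (2 * L * j + L) (Sset n L p u) = (L * j + u j)%N.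
Proof.
move=> hj hu; rewrite /Sset cnt_cat cnt_Sp_point // ifF; last lia.
have h1 : (2 * L * j.+1 <= 2 * L * n)%N by rewrite leq_mul2l hj orbT.
rewrite mulnS in h1.
rewrite cnt_iota; lia.
Qed.

Lemma cnt_Sp_step L u u' t m :
  (forall i, u i <= L /\ u' i <= L /\ u i <= u' i <= (u i).+1)%N ->
  (cnt t (Sp L u m) <= cnt t (Sp L u' m) <= (cnt t (Sp L u m)).+1)%N /\
  ((2 * L * m <= t)%N -> cnt t (Sp L u m) = cnt t (Sp L u' m)).
Proof.
move=> hu; elim: m => [|m [IH1 IH2]]; first by rewrite /cnt.
rewrite !cnt_SpS.
have [h1 [h2 h3]] := hu m.
have e : (2 * L * m.+1 = 2 * L * m + 2 * L)%N by rewrite mulnS addnC.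
rewrite e.
move: IH1 IH2; set B := (2 * L * m)%N; set c := cnt t (Sp L u m); set c' := cnt t (Sp L u' m).
move=> IH1 IH2.
case: (leqP B t) => hB.
  have := IH2 hB; lia.
split; last lia.
have -> : (t - (B + L - u m) = 0)%N by lia.
have -> : (t - (B + L - u' m) = 0)%N by lia.
lia.
Qed.

Lemma cnt_Sset_step n L p u u' t :
  (forall i, u i <= L /\ u' i <= L /\ u i <= u' i <= (u i).+1)%N ->
  (cnt t (Sset n L p u) <= cnt t (Sset n L p u') <= (cnt t (Sset n L p u)).+1)%N.
Proof.
move=> hu; rewrite /Sset !cnt_cat; have [h1 _] := cnt_Sp_step t n hu; lia.
Qed.

Section Embed.
Variables (T : finType) (D : T -> T -> nat) (L p : nat).
Hypotheses (D0 : forall x, D x x = 0%N) (Dsym : forall x y, D x y = D y x)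
  (Dtri : forall x y z, (D x z <= D x y + D y z)%N) (DL : forall x y, (D x y <= L)%N).

Definition uu (x : T) (j : nat) : nat := if (j < #|T|)%N then D x (nth x (enum T) j) else 0%N.
Definition ff (x : T) : seq nat := Sset #|T| L p (uu x).

Lemma uuL x j : (uu x j <= L)%N.
Proof. by rewrite /uu; case: ifP. Qed.

Lemma ff_kset x : is_kset (#|T| * L + p) (ff x).
Proof. by apply: Sset_kset => j _; exact: uuL. Qed.

Lemma uu_lip x y j : (uu y j <= uu x j + D x y)%N.
Proof.
rewrite /uu; case: ifP => hj //.
have -> : nth y (enum T) j = nth x (enum T) j by apply: set_nth_default; rewrite -cardT.
move: (Dtri y x (nth x (enum T) j)); rewrite (Dsym y x); lia.
Qed.

Lemma uu_at x y : uu x (index y (enum T)) = D x y.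
Proof.
rewrite /uu cardT index_mem mem_enum /=.
by rewrite nth_index // mem_enum.
Qed.

Lemma ff_dI x y : dI (#|T| * L + p) (ff x) (ff y) = (2 * D x y)%N.
Proof.
set k := (#|T| * L + p)%N.
set Dm := D x y.
pose w j := maxn (uu x j) (uu y j).
pose U i j := if (i <= Dm)%N then minn (uu x j + i) (w j) else maxn (w j - (i - Dm)) (uu y j).
pose F i := Sset #|T| L p (U i).
have hUL : forall i j, (U i j <= L)%N.
  move=> i j; have := uuL x j; have := uuL y j; rewrite /U /w; case: ifP => _; lia.
have hFk : forall i, is_kset k (F i) by move=> i; apply: Sset_kset => j _; exact: hUL.
have hl1 := uu_lip x y; have hl2 := uu_lip y x.
have hstep : forall i, (i < 2 * Dm)%N ->
   (F i == F i.+1) || (interlace k (F i) (F i.+1) || interlace k (F i.+1) (F i)).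
  move=> i hi; apply/orP; right; apply/orP.
  case: (ltnP i Dm) => hiD.
    right; apply: cnt_interlace => // t.
    suff /andP[a b] : (cnt t (F i) <= cnt t (F i.+1) <= (cnt t (F i)).+1)%N by split.
    apply: cnt_Sset_step => j.
    have := hl1 j; have := hl2 j; rewrite (Dsym y x) -/Dm.
    rewrite /U /w; have -> : (i <= Dm)%N = true by lia.
    have := uuL x j; have := uuL y j.
    case: (leqP i.+1 Dm) => h; lia.
  left; apply: cnt_interlace => // t.
  suff /andP[a b] : (cnt t (F i.+1) <= cnt t (F i) <= (cnt t (F i.+1)).+1)%N by split.
  apply: cnt_Sset_step => j.
  have := hl1 j; have := hl2 j; rewrite (Dsym y x) -/Dm.
  rewrite /U /w; have -> : (i.+1 <= Dm)%N = false by lia.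
  have := uuL x j; have := uuL y j.
  case: (leqP i Dm) => h; lia.
have [hp1 hp2] := path_fun (R := fun a b => (a == b) || (interlace k a b || interlace k b a)) (F := F) (m := 0) (N := 2 * Dm) (fun i hi => hstep i ltac:(lia)).
have hF0 : F 0%N = ff x.
  apply: Sset_ext => j; have := hl1 j; have := hl2 j; rewrite /U /w; rewrite leq0n; lia.
have hFN : F (2 * Dm)%N = ff y.
  apply: Sset_ext => j; have := hl1 j; have := hl2 j; rewrite (Dsym y x) -/Dm /U /w.
  case: (leqP (2 * Dm) Dm) => hh; lia.
rewrite hF0 add0n hFN in hp1 hp2.
have hall : all (is_kset k) [seq F i | i <- iota 1 (2 * Dm)].
  by apply/allP => a /mapP [i _ ->].
have [q [hq1 hq2 hq3 hq4]] := shorten_path hall hp1.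
rewrite hp2 in hq3.
have [hw hmin] := @dI_spec k (ff x) (ff y) (ff_kset x) (ex_intro _ q (And3 hq1 hq2 hq3)).
apply/eqP; rewrite eqn_leq; apply/andP; split.
  apply: leq_trans (hmin (size q) _) _.
    by split; [exact: ff_kset|exists q; split].
  by rewrite size_map size_iota in hq4.
case: hw => _ [r [hr1 hr2 hr3 hr4]].
have := walk_cnt (2 * L * index y (enum T) + L) (2 * L * index x (enum T) + L) (ff_kset x) hr2 hr3.
have hix : (index x (enum T) < #|T|)%N by rewrite cardT index_mem mem_enum.
have hiy : (index y (enum T) < #|T|)%N by rewrite cardT index_mem mem_enum.
rewrite hr4 hr1 /ff !cnt_Sset_point // ?uu_at; try (move=> ?; exact: uuL).
rewrite !D0 (Dsym y x) -/Dm; lia.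
Qed.

End Embed.

From mathcomp Require Import ring lra.
Local Open Scope ring_scope.

Lemma bigmin_le_gen (R : realType) (I : finType) (P : pred I) (x0 : R) (F : I -> R) j :
  P j -> \big[Num.min/x0]_(i | P i) F i <= F j.
Proof.
have := mem_index_enum j; rewrite unlock; elim: (index_enum I) => //= i l ih.
rewrite inE => /orP [/eqP-> ->|/ih leminlfi Pi]; first by rewrite ge_min lexx.
by case: ifPn => Pj; [rewrite ge_min leminlfi// orbC|exact: leminlfi].
Qed.

Lemma part1 :
  (forall (R : realType) (T : finType) (d : T -> T -> R) (n : nat),
     is_metric d -> #|T| = n -> (2 <= n)%N ->
     forall (eps : R), 0 < eps -> eps < 1 ->
     forall k : nat,
       (n%:R + 3 / 2) * ((diam d / sep d) / eps + diam d + 1) <= k%:R ->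
       exists (s : R) (f : T -> seq nat),
         [/\ 0 < s, forall x, is_kset k (f x)
           & forall x y,
               s * d x y <= (dI k (f x) (f y))%:R
               /\ (dI k (f x) (f y))%:R <= s * (1 - eps)^-1 * d x y]).
Proof.
move=> R T d n [dge0 deq0 dsym dtri] hn hn2 eps he0 he1 k hk.
have [x0 [y0 [_ _ hxy0]]] : exists x y : T, [/\ x \in T, y \in T & x != y].
  by apply/card_gt1P; rewrite hn.
have dpos : forall x y, x != y -> 0 < d x y.
  move=> x y hxy; rewrite lt_def dge0 andbT; apply/eqP => /deq0 h; by rewrite h eqxx in hxy.
have hdiam : forall x y, d x y <= diam d.
  by move=> x y; exact: (le_bigmax 0 (fun q : T * T => d q.1 q.2) (x, y)).
have hdiam0 : 0 < diam d by apply: lt_le_trans (dpos _ _ hxy0) (hdiam _ _).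
have hsep : forall x y, x != y -> sep d <= d x y.
  move=> x y hxy; rewrite /sep; apply: (@bigmin_le_gen R (prod T T) _ _ (fun q => d q.1 q.2) (x, y)); exact: hxy.
have hsep0 : 0 < sep d.
  by apply: lt_bigmin => // [[a b]] /= hab; exact: dpos.
set sp := sep d in hsep hsep0 hk; set dm := diam d in hdiam hdiam0 hk.
set M := (eps * sp)^-1.
have hM : 0 < M by rewrite invr_gt0 mulr_gt0.
pose Dn x y := if x == y then 0%N else (Num.trunc (M * d x y)).+1.
pose L := (Num.trunc (M * dm)).+1.
have hMd : forall x y, 0 <= M * d x y by move=> x y; rewrite mulr_ge0 // ltW.
have hDr : forall x y, x != y -> M * d x y < (Dn x y)%:R <= M * d x y + 1.
  move=> x y hxy; rewrite /Dn (negbTE hxy).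
  have /andP[h1 h2] := trunc_itv (hMd x y); rewrite h2 /= -natr1; lra.
have D0 : forall x, Dn x x = 0%N by move=> x; rewrite /Dn eqxx.
have Dsym : forall x y, Dn x y = Dn y x by move=> x y; rewrite /Dn eq_sym dsym.
have Dtri : forall x y z, (Dn x z <= Dn x y + Dn y z)%N.
  move=> x y z; rewrite /Dn.
  case: (eqVneq x z) => [//|hxz]; case: (eqVneq x y) => [<-|hxy]; first by rewrite (negbTE hxz).
  case: (eqVneq y z) => [<-|hyz]; first by rewrite ?eqxx addn0.
  rewrite -ltnS -(ltr_nat R).
  have /andP[a1 a2] := trunc_itv (hMd x z).
  have /andP[b1 b2] := trunc_itv (hMd x y).
  have /andP[c1 c2] := trunc_itv (hMd y z).
  have := dtri x y z; rewrite -!natr1 !natrD -!natr1 in a2 b2 c2 *.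
  move=> ht; have : M * d x z <= M * d x y + M * d y z by rewrite -mulrDr ler_wpM2l // ltW.
  lra.
have DL : forall x y, (Dn x y <= L)%N.
  move=> x y; rewrite /Dn /L; case: ifP => // _.
  rewrite ltnS -ltnS -(ltr_nat R).
  have /andP[a1 a2] := trunc_itv (hMd x y).
  have /andP[b1 b2] := trunc_itv (ltW (mulr_gt0 hM hdiam0)).
  have : M * d x y <= M * dm by rewrite ler_wpM2l // ltW.
  lra.
have hnL : (n * L <= k)%N.
  rewrite -(ler_nat R) natrM; apply: le_trans hk.
  have /andP[b1 b2] := trunc_itv (ltW (mulr_gt0 hM hdiam0)).
  have e : M * dm = dm / sp / eps by rewrite /M invfM; field; apply/andP; split; rewrite gt_eqF.
  have hX : 0 <= dm / sp / eps by rewrite !divr_ge0 // ltW.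
  have hn0 : 0 <= n%:R :> R by [].
  rewrite /L -natr1.
  set t := Num.trunc (M * dm) in b1 b2 *.
  have h : t%:R + 1 <= dm / sp / eps + 1 by rewrite -e; lra.
  apply: le_trans (_ : n%:R * (dm / sp / eps + 1) <= _); first by rewrite ler_wpM2l.
  nra.
set p := (k - n * L)%N.
have hk' : k = (#|T| * L + p)%N by rewrite hn /p; lia.
exists (2 * M), (ff Dn L p); split.
- by rewrite mulr_gt0.
- by move=> x; rewrite hk'; exact: ff_kset.
move=> x y; rewrite hk' ff_dI //.
case: (eqVneq x y) => [<-|hxy].
  by rewrite D0 (proj2 (deq0 x x) erefl) !mulr0.
have [h1 h2] := andP (hDr x y hxy).
have hsd := hsep x y hxy.
have hc : 0 < 1 - eps by lra.
rewrite natrM; split; first by rewrite -mulrA ler_pM2l //; lra.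
have hMe : 1 <= M * d x y * eps.
  have -> : M * d x y * eps = d x y / sp by rewrite /M invfM; field; apply/andP; split; rewrite gt_eqF.
  by rewrite ler_pdivlMr // mul1r.
have : M * d x y + 1 <= M * d x y * (1 - eps)^-1.
  by rewrite ler_pdivlMr //; lra.
move=> h3.
have -> : 2 * M * (1 - eps)^-1 * d x y = 2 * (M * d x y * (1 - eps)^-1) by ring.
rewrite ler_pM2l //; lra.
Qed.

Lemma dI_refl k A : is_kset k A -> dI k A A = 0%N.
Proof.
move=> hA; have [_ hmin] := @dI_spec k A A hA (ex_intro _ [::] (And3 erefl erefl erefl)).
apply/eqP; rewrite -leqn0; apply: hmin; split=> //; by exists [::].
Qed.

Theorem theorem5p3 :
  (forall (R : realType) (T : finType) (d : T -> T -> R) (n : nat),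
     is_metric d -> #|T| = n -> (2 <= n)%N ->
     forall (eps : R), 0 < eps -> eps < 1 ->
     forall k : nat,
       (n%:R + 3 / 2) * ((diam d / sep d) / eps + diam d + 1) <= k%:R ->
       exists (s : R) (f : T -> seq nat),
         [/\ 0 < s, forall x, is_kset k (f x)
           & forall x y,
               s * d x y <= (dI k (f x) (f y))%:R
               /\ (dI k (f x) (f y))%:R <= s * (1 - eps)^-1 * d x y])
  /\
  (forall (R : realType) (T : finType) (d : T -> T -> R),
     is_metric d ->
     forall (eps : R), 0 < eps ->
     exists (k : nat) (s : R) (f : T -> seq nat),
       [/\ 0 < s, forall x, is_kset k (f x)
         & forall x y,
             s * d x y <= (dI k (f x) (f y))%:R
             /\ (dI k (f x) (f y))%:R <= s * (1 + eps) * d x y]).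
Proof.
split; first exact: part1.
move=> R T d hd eps he.
have [dge0 deq0 dsym dtri] := hd.
case: (leqP 2 #|T|) => hT; last first.
  exists 0%N, 1, (fun _ => [::]); split => // x y.
  have hxy : x = y.
    apply/eqP; apply/negP => /negP hne.
    have : (1 < #|T|)%N by apply/card_gt1P; exists x, y.
    lia.
  subst y; rewrite dI_refl // (proj2 (deq0 x x) erefl) !mulr0; lra.
set e' := eps / (1 + eps).
have he'0 : 0 < e' by rewrite divr_gt0 // ltr_wpDr // ltW.
have he'1 : e' < 1 by rewrite ltr_pdivrMr ?mul1r; lra.
set B := (#|T|%:R + 3 / 2) * (diam d / sep d / e' + diam d + 1).
have hB : B <= (Num.trunc B).+1%:R.
  case: (leP 0 B) => h; first by have /andP[_ h2] := trunc_itv h; exact: ltW.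
  by apply: le_trans (ltW h) _.
have [s [f [hs hf hsf]]] := part1 hd erefl hT he'0 he'1 hB.
exists (Num.trunc B).+1, s, f; split => // x y.
have [h1 h2] := hsf x y; split => //.
have -> : s * (1 + eps) = s * (1 - e')^-1 by congr (_ * _); rewrite /e'; field; lra.
done.
Qed.
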